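(* Let $R=\mathbb{Z}[t]/(t^3)$ and let $p$ be a prime. Then, writing $X=p^{-s_1}$ and $Y=p^{-s_2}$, \[ \zeta_{R,p}(s_1,s_2)=\frac{1+X+pX^2-pX^3Y-p^2X^4Y-p^2X^5Y}{(1-XY)(1-pX^2Y)(1-p^2X^3)} . \] This holds as an identity of formal power series in $X,Y$, and hence as an identity of functions for all complex $s_1,s_2$ with real parts sufficiently large.
   Context: Let $R=\mathbb{Z}[t]/(t^3)$, viewed as the additive group $\mathbb{Z}^3$ with basis $t^2,t,1$. A subring $S$ of $R$ means an additive subgroup of finite index that contains $1$ and is closed under multiplication. For a finite-index subgroup $S\subseteq R$ there are unique positive integers $\alpha_1(S),\alpha_2(S),\alpha_3(S)$ with $\alpha_{i+1}\mid\alpha_i$ and $R/S\cong \mathbb{Z}/\alpha_1\mathbb{Z}\oplus\mathbb{Z}/\alpha_2\mathbb{Z}\oplus\mathbb{Z}/\alpha_3\mathbb{Z}$. The tuple $(\alpha_1(S),\alpha_2(S),\alpha_3(S))$ is called the cotype of $S$. For a subring $S$ one always has $\alpha_3(S)=1$. For a prime $p$ define \[ \zeta_{R,p}(s_1,s_2)=\sum_{S}\alpha_1(S)^{-s_1}\alpha_2(S)^{-s_2}, \] where the sum runs over all subrings $S$ of $R$ whose index $[R:S]$ is a power of $p$ (including index $1$). For such $S$ one has $\alpha_1(S)=p^a$ and $\alpha_2(S)=p^b$ for some $a,b\ge 0$, so $\zeta_{R,p}(s_1,s_2)$ is a power series in $X=p^{-s_1}$ and $Y=p^{-s_2}$. 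*)

(* Defs.v *)
From Stdlib Require Import ZArith List Znumtheory.
Import ListNotations.
Open Scope Z_scope.

(* R = Z[t]/(t^3) as Z^3; an element (c2, c1, c0) stands for c2 t^2 + c1 t + c0
   (basis t^2, t, 1). *)
Definition Z3 : Type := (Z * Z * Z)%type.

Definition r0 : Z3 := (0, 0, 0).
Definition r1 : Z3 := (0, 0, 1).
Definition radd (u v : Z3) : Z3 :=
  let '(a2, a1, a0) := u in let '(b2, b1, b0) := v in (a2 + b2, a1 + b1, a0 + b0).
Definition ropp (u : Z3) : Z3 := let '(a2, a1, a0) := u in (- a2, - a1, - a0).
Definition rmul (u v : Z3) : Z3 :=
  let '(a2, a1, a0) := u in let '(b2, b1, b0) := v in
  (a2 * b0 + a1 * b1 + a0 * b2, a1 * b0 + a0 * b1, a0 * b0).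

(* Z-bilinear pairing Z^3 x Z^3 -> Z, used to describe additive maps Z^3 -> Z *)
Definition dot (m u : Z3) : Z :=
  let '(m2, m1, m0) := m in let '(a2, a1, a0) := u in m2 * a2 + m1 * a1 + m0 * a0.

Definition subset3 := Z3 -> Prop.
Definition same (S T : subset3) : Prop := forall x, S x <-> T x.

Definition is_subgroup (S : subset3) : Prop :=
  S r0 /\ (forall u v, S u -> S v -> S (radd u v)) /\ (forall u, S u -> S (ropp u)).

(* R / S is isomorphic to Z/a1 (+) Z/a2 (+) Z/a3 with a3 | a2 | a1, all positive.
   Every additive map Z^3 -> Z/a1 x Z/a2 x Z/a3 is u |-> (m1.u, m2.u, m3.u) mod (a1,a2,a3);
   such a map is surjective with kernel S iff it induces an iso R/S ~ product. *)
Definition has_cotype (S : subset3) (a1 a2 a3 : Z) : Prop :=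
  0 < a3 /\ (a3 | a2) /\ (a2 | a1) /\
  exists m1 m2 m3 : Z3,
    (forall y1 y2 y3 : Z, exists u : Z3,
        (a1 | dot m1 u - y1) /\ (a2 | dot m2 u - y2) /\ (a3 | dot m3 u - y3)) /\
    (forall u : Z3, S u <-> ((a1 | dot m1 u) /\ (a2 | dot m2 u) /\ (a3 | dot m3 u))).

(* Finite-index subgroup containing 1 and closed under multiplication. *)
Definition is_subring (S : subset3) : Prop :=
  is_subgroup S /\ (exists a1 a2 a3, has_cotype S a1 a2 a3) /\
  S r1 /\ (forall u v, S u -> S v -> S (rmul u v)).

Definition count_is (P : subset3 -> Prop) (n : nat) : Prop :=
  exists L : list subset3,
    length L = n /\
    (forall S, In S L -> P S) /\
    (forall S, P S -> exists T, In T L /\ same S T) /\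
    ForallOrdPairs (fun S T => ~ same S T) L.

(* Formal power series in X, Y with integer coefficients: f a b = coeff of X^a Y^b. *)
Definition fps := nat -> nat -> Z.

Fixpoint zsum (n : nat) (f : nat -> Z) : Z :=
  match n with O => 0 | S k => zsum k f + f k end.

Definition fmul (f g : fps) : fps := fun a b =>
  zsum (S a) (fun i => zsum (S b) (fun j => f i j * g (a - i)%nat (b - j)%nat)).
Definition fadd (f g : fps) : fps := fun a b => f a b + g a b.
Definition mono (c : Z) (i j : nat) : fps := fun a b =>
  if (Nat.eqb a i && Nat.eqb b j)%bool then c else 0.

Definition zeta_num (p : Z) : fps :=
  fadd (mono 1 0 0) (fadd (mono 1 1 0) (fadd (mono p 2 0)
    (fadd (mono (- p) 3 1) (fadd (mono (- p ^ 2) 4 1) (mono (- p ^ 2) 5 1))))).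

Definition zeta_den (p : Z) : fps :=
  fmul (fadd (mono 1 0 0) (mono (-1) 1 1))
       (fmul (fadd (mono 1 0 0) (mono (- p) 2 1))
             (fadd (mono 1 0 0) (mono (- p ^ 2) 3 0))).

(* Main.v *)
Require Import Defs.
From Stdlib Require Import ZArith List Znumtheory Lia Classical.
Import ListNotations.
Open Scope Z_scope.

Section P.
Variable p : Z.
Hypothesis hp : prime p.

Lemma p_gt1 : 1 < p. Proof. destruct hp; lia. Qed.

Definition pp (n : nat) : Z := p ^ Z.of_nat n.

Lemma pp_pos n : 0 < pp n.
Proof. unfold pp. apply Z.pow_pos_nonneg; [pose proof p_gt1; lia | lia]. Qed.

Lemma pp_add m n : pp (m + n) = pp m * pp n.
Proof. unfold pp. rewrite Nat2Z.inj_add. apply Z.pow_add_r; lia. Qed.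

Lemma pp_S n : pp (S n) = p * pp n.
Proof. unfold pp. rewrite Nat2Z.inj_succ. rewrite Z.pow_succ_r; [ring|lia]. Qed.

Lemma pp_0 : pp 0 = 1. Proof. reflexivity. Qed.

Lemma pp_le_mono m n : (m <= n)%nat -> pp m <= pp n.
Proof. intros. unfold pp. apply Z.pow_le_mono_r; [pose proof p_gt1; lia | lia]. Qed.

Lemma pp_lt_mono m n : (m < n)%nat -> pp m < pp n.
Proof. intros. unfold pp. apply Z.pow_lt_mono_r; [pose proof p_gt1; lia | lia | lia]. Qed.

Lemma pp_lt_iff m n : pp m < pp n -> (m < n)%nat.
Proof. intros H. destruct (Nat.lt_ge_cases m n); auto. apply pp_le_mono in H0. lia. Qed.

Lemma pp_div_le m n : (pp m | pp n) -> (m <= n)%nat.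
Proof.
  intros H. destruct (Nat.le_gt_cases m n); auto.
  apply Z.divide_pos_le in H; [|apply pp_pos]. apply pp_lt_mono in H0. lia.
Qed.

Lemma pp_div m n : (m <= n)%nat -> (pp m | pp n).
Proof. intros. replace n with (m + (n - m))%nat by lia. rewrite pp_add. apply Z.divide_mul_l. apply Z.divide_refl. Qed.

Lemma pp_inj m n : pp m = pp n -> m = n.
Proof. intros H. apply Nat.le_antisymm; apply pp_div_le; rewrite H; apply Z.divide_refl. Qed.

Lemma p_not_div1 : ~ (p | 1).
Proof. intros H. apply Z.divide_pos_le in H; [|lia]. pose proof p_gt1. lia. Qed.

Lemma rel_prime_pp d n : ~ (p | d) -> rel_prime d (pp n).
Proof.
  intros H. induction n as [|n IH].
  - rewrite pp_0. apply rel_prime_sym, rel_prime_1.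
  - rewrite pp_S. apply rel_prime_mult; auto. apply rel_prime_sym. apply prime_rel_prime; auto.
Qed.

Lemma div_pp d n : 0 <= d -> (d | pp n) -> exists k, (k <= n)%nat /\ d = pp k.
Proof.
  revert d. induction n as [|n IH]; intros d Hd H.
  - exists 0%nat. split; [lia|]. rewrite pp_0 in *. apply Z.divide_1_r_nonneg in H; auto.
  - destruct (Zdivide_dec p d) as [[d' Hd']|Hn].
    + subst d. rewrite pp_S in H. rewrite (Z.mul_comm d' p) in H.
      apply Z.mul_divide_cancel_l in H; [|pose proof p_gt1; lia].
      assert (0 <= d') by (pose proof p_gt1; nia).
      destruct (IH d' H0 H) as [k [Hk ->]]. exists (S k). split; [lia|]. rewrite pp_S. ring.
    + exists 0%nat. split; [lia|]. rewrite pp_0.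
      assert (rel_prime d (pp (S n))).
      { apply rel_prime_pp; auto. }
      apply Z.divide_1_r_nonneg; auto.
      apply (Gauss d (pp (S n)) 1); auto. rewrite Z.mul_1_r. auto.
Qed.

Lemma val_decomp n : n <> 0 -> exists c r, n = pp c * r /\ ~ (p | r).
Proof.
  intros Hn. remember (Z.abs_nat n) as m. revert n Hn Heqm.
  induction m as [m IH] using (well_founded_induction lt_wf). intros n Hn Hm.
  destruct (Zdivide_dec p n) as [[n' Hn']|Hd].
  - subst n. assert (n' <> 0) by lia.
    destruct (IH (Z.abs_nat n')) with n' as [c [r [Hr1 Hr2]]]; auto.
    + subst m. pose proof p_gt1. rewrite Zabs2Nat.inj_mul. 
      assert (Z.abs_nat p >= 2)%nat by lia. assert (Z.abs_nat n' > 0)%nat by lia. nia.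
    + exists (S c), r. split; auto. rewrite pp_S, Hr1. ring.
  - exists 0%nat, n. split; auto. rewrite pp_0. ring.
Qed.

Lemma least_nat (Q : nat -> Prop) n : Q n -> exists m, Q m /\ forall k, (k < m)%nat -> ~ Q k.
Proof.
  revert Q. induction n as [n IH] using (well_founded_induction lt_wf). intros Q Hn.
  destruct (classic (exists k, (k < n)%nat /\ Q k)) as [[k [Hk HQ]]|Hno].
  - apply (IH k Hk Q HQ).
  - exists n. split; auto. intros k Hk HQ. apply Hno. eauto.
Qed.

End P.

Definition smul (k : Z) (u : Z3) : Z3 := let '(a, b, c) := u in (k * a, k * b, k * c).
Definition lc (k : Z) (u : Z3) (l : Z) (v : Z3) : Z3 := radd (smul k u) (smul l v).

Lemma dot_lc m k u l v : dot m (lc k u l v) = k * dot m u + l * dot m v.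
Proof. destruct m as [[? ?] ?], u as [[? ?] ?], v as [[? ?] ?]; simpl; ring. Qed.

Lemma dot_smul m k u : dot m (smul k u) = k * dot m u.
Proof. destruct m as [[? ?] ?], u as [[? ?] ?]; simpl; ring. Qed.

Lemma div_lc (a x y k l : Z) : (a | x) -> (a | y) -> (a | k * x + l * y).
Proof. intros. apply Z.divide_add_r; apply Z.divide_mul_r; auto. Qed.

Lemma cot_lc T a1 a2 a3 u v k l :
  has_cotype T a1 a2 a3 -> T u -> T v -> T (lc k u l v).
Proof.
  intros [_ [_ [_ [m1 [m2 [m3 [_ H]]]]]]] Hu Hv.
  apply H in Hu. apply H in Hv. apply H. rewrite !dot_lc.
  destruct Hu as [? [? ?]], Hv as [? [? ?]]. split; [|split]; apply div_lc; auto.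
Qed.

Lemma cot_exp T a1 a2 a3 n :
  has_cotype T a1 a2 a3 -> ((forall u, T (smul n u)) <-> (a1 | n)).
Proof.
  intros [H3 [H32 [H21 [m1 [m2 [m3 [Hs H]]]]]]]. split.
  - intros Hn. destruct (Hs 1 0 0) as [u [Hu1 _]].
    specialize (Hn u). apply H in Hn. destruct Hn as [Hn _]. rewrite dot_smul in Hn.
    destruct Hu1 as [q Hq].
    assert (Hq' : dot m1 u = q * a1 + 1) by lia.
    replace n with (n * dot m1 u - n * q * a1) by (rewrite Hq'; ring).
    apply Z.divide_sub_r; auto. apply Z.divide_mul_r, Z.divide_refl.
  - intros Hn u. apply H. rewrite !dot_smul.
    split; [|split]; apply Z.divide_mul_l; eauto using Z.divide_trans.
Qed.

Definition Cprop (T : subset3) (n : Z) : Prop :=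
  exists w, forall u, exists k, T (lc n u (- k) w).

Section Q.
Variable p : Z.
Hypothesis hp : prime p.

Lemma cot_C T a b a3 n :
  has_cotype T (pp p a) (pp p b) a3 -> (Cprop T n <-> (pp p b | n)).
Proof.
  intros Hc. pose proof Hc as [H3 [H32 [H21 [m1 [m2 [m3 [Hs H]]]]]]]. split.
  - intros [w Hw]. apply NNPP. intros Hnd.
    assert (Hn0 : n <> 0) by (intro; subst; apply Hnd, Z.divide_0_r).
    destruct (val_decomp p hp n Hn0) as [c [r [Hnr Hr]]].
    assert (Hcb : (c < b)%nat).
    { destruct (Nat.lt_ge_cases c b); auto. exfalso. apply Hnd. rewrite Hnr.
      apply Z.divide_mul_l. apply pp_div; auto. }
    assert (Hba : (b <= a)%nat) by (apply (pp_div_le p hp); auto).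
    set (P := pp p c) in *. set (q := pp p (b - 1 - c)).
    assert (Hpb : pp p b = P * q * p).
    { subst P q. assert (Hb1 : b = S (c + (b - 1 - c))) by lia. rewrite Hb1 at 1. rewrite pp_S, pp_add. ring. }
    assert (Hpa : pp p a = P * q * p * pp p (a - b)).
    { rewrite <- Hpb, <- pp_add. f_equal. lia. }
    set (z := pp p (a - b)) in *.
    rewrite Hpa, Hpb in *. subst n.
    destruct (Hs 1 0 0) as [e1 [E11 [E12 _]]].
    destruct (Hs 0 1 0) as [e2 [E21 [E22 _]]].
    destruct (Hw e1) as [k1 Hk1]. destruct (Hw e2) as [k2 Hk2].
    apply H in Hk1. apply H in Hk2. rewrite !dot_lc in Hk1, Hk2.
    destruct Hk1 as [D1 [D2 _]]. destruct Hk2 as [D3 [D4 _]].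
    set (w1 := dot m1 w) in *. set (w2 := dot m2 w) in *.
    rewrite Z.sub_0_r in E12, E21.
    destruct E11 as [s1 E11]. destruct E12 as [s2 E12]. destruct E21 as [s3 E21]. destruct E22 as [s4 E22].
    destruct D1 as [t1 D1]. destruct D2 as [t2 D2]. destruct D3 as [t3 D3]. destruct D4 as [t4 D4].
    assert (R11 : dot m1 e1 = 1 + s1 * (P * q * p * z)) by lia.
    assert (R22 : dot m2 e2 = 1 + s4 * (P * q * p)) by lia.
    rewrite R11 in D1. rewrite E12 in D2. rewrite E21 in D3. rewrite R22 in D4.
    assert (HU : k1 * w1 = P * (r + p * (q * z * (P * r * s1 - t1)))) by (ring_simplify; ring_simplify in D1; lia).
    assert (HV : k2 * w2 = P * (r + p * (q * (P * r * s4 - t4)))) by (ring_simplify; ring_simplify in D4; lia).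
    assert (HX : k1 * w2 = P * (q * p * (P * r * s2 - t2))) by (ring_simplify; ring_simplify in D2; lia).
    assert (HY : k2 * w1 = P * (q * p * z * (P * r * s3 - t3))) by (ring_simplify; ring_simplify in D3; lia).
    assert (Heq : (k1 * w1) * (k2 * w2) = (k1 * w2) * (k2 * w1)) by ring.
    rewrite HU, HV, HX, HY in Heq.
    assert (HP : 0 < P) by (apply pp_pos; auto).
    assert (Heq2 : (r + p * (q * z * (P * r * s1 - t1))) * (r + p * (q * (P * r * s4 - t4)))
                   = p * (q * q * p * z * (P * r * s2 - t2) * (P * r * s3 - t3))).
    { apply (Z.mul_reg_l _ _ (P * P)); [nia|]. rewrite <- Z.mul_assoc. 
      replace (P * P * (p * (q * q * p * z * (P * r * s2 - t2) * (P * r * s3 - t3))))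
        with (P * (q * p * (P * r * s2 - t2)) * (P * (q * p * z * (P * r * s3 - t3)))) by ring.
      rewrite <- Heq. ring. }
    assert (Hdv : (p | (r + p * (q * z * (P * r * s1 - t1))) * (r + p * (q * (P * r * s4 - t4))))).
    { rewrite Heq2. apply Z.divide_factor_l. }
    apply prime_mult in Hdv; auto. apply Hr.
    destruct Hdv as [Hd|Hd].
    + replace r with ((r + p * (q * z * (P * r * s1 - t1))) - p * (q * z * (P * r * s1 - t1))) by ring.
      apply Z.divide_sub_r; auto. apply Z.divide_factor_l.
    + replace r with ((r + p * (q * (P * r * s4 - t4))) - p * (q * (P * r * s4 - t4))) by ring.
      apply Z.divide_sub_r; auto. apply Z.divide_factor_l.
  - intros Hb. destruct (Hs 1 0 0) as [e1 [E11 [E12 E13]]]. exists e1. intros u.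
    exists (n * dot m1 u). apply H. rewrite !dot_lc.
    rewrite Z.sub_0_r in E12, E13.
    split; [|split].
    + destruct E11 as [s E11].
      replace (n * dot m1 u + - (n * dot m1 u) * dot m1 e1) with (n * dot m1 u * (- (s * pp p a)))
        by (rewrite <- E11; ring).
      apply Z.divide_mul_r, Z.divide_opp_r, Z.divide_mul_r, Z.divide_refl.
    + apply Z.divide_add_r. apply Z.divide_mul_l; auto.
      apply Z.divide_mul_r; auto.
    + apply Z.divide_add_r. apply Z.divide_mul_l; eauto using Z.divide_trans.
      apply Z.divide_mul_r; auto.
Qed.
End Q.

Definition Sset (al be ga : Z) : subset3 := fun u =>
  let '(x2, x1, x0) := u in exists y, x1 = ga * y /\ (al | x2 - be * y).

Lemma cot_same T U a1 a2 a3 : has_cotype T a1 a2 a3 -> same T U -> has_cotype U a1 a2 a3.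
Proof.
  intros [H1 [H2 [H3 [m1 [m2 [m3 [Hs H]]]]]]] Hsm.
  repeat split; auto. exists m1, m2, m3. split; auto.
  intros u. rewrite <- (Hsm u). auto.
Qed.

Section Q.
Variable p : Z.
Hypothesis hp : prime p.
Notation pp := (pp p).

Lemma cot_unique T a b a3 a' b' a3' :
  has_cotype T (pp a) (pp b) a3 -> has_cotype T (pp a') (pp b') a3' -> a = a' /\ b = b'.
Proof.
  intros H H'. split.
  - apply Nat.le_antisymm; apply (pp_div_le p hp).
    + apply (cot_exp _ _ _ _ _ H). apply (cot_exp _ _ _ _ _ H'). apply Z.divide_refl.
    + apply (cot_exp _ _ _ _ _ H'). apply (cot_exp _ _ _ _ _ H). apply Z.divide_refl.
  - apply Nat.le_antisymm; apply (pp_div_le p hp).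
    + apply (cot_C p hp _ _ _ _ _ H). apply (cot_C p hp _ _ _ _ _ H'). apply Z.divide_refl.
    + apply (cot_C p hp _ _ _ _ _ H'). apply (cot_C p hp _ _ _ _ _ H). apply Z.divide_refl.
Qed.

Lemma cotC1 i j t : (j <= i)%nat ->
  has_cotype (Sset (pp i) (pp j * t) (pp j)) (pp i) (pp j) 1.
Proof.
  intros Hji. split; [lia|]. split; [apply Z.divide_1_l|]. split; [apply pp_div; auto|].
  exists (1, -t, 0), (0, 1, 0), (0, 0, 0). split.
  - intros y1 y2 y3. exists (y1 + t * y2, y2, 0). cbn [dot Sset].
    split; [|split]; [exists 0 | exists 0 | apply Z.divide_1_l]; ring.
  - intros [[x2 x1] x0]. cbn [dot Sset]. split.
    + intros [y [Hy Hd]]. split; [|split; [|apply Z.divide_1_l]].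
      * replace (1 * x2 + - t * x1 + 0 * x0) with (x2 - pp j * t * y) by (subst; ring). auto.
      * subst. replace (0 * x2 + 1 * (pp j * y) + 0 * x0) with (y * pp j) by ring. apply Z.divide_factor_r.
    + intros [Hd1 [[y Hy] _]]. exists y. split; [lia|].
      replace (x2 - pp j * t * y) with (1 * x2 + - t * x1 + 0 * x0) by nia. auto.
Qed.

Lemma cotC2 i j : (i < j)%nat ->
  has_cotype (Sset (pp i) 0 (pp j)) (pp j) (pp i) 1.
Proof.
  intros Hij. split; [lia|]. split; [apply Z.divide_1_l|]. split; [apply pp_div; lia|].
  exists (0, 1, 0), (1, 0, 0), (0, 0, 0). split.
  - intros y1 y2 y3. exists (y2, y1, 0). cbn [dot Sset].
    split; [|split]; [exists 0 | exists 0 | apply Z.divide_1_l]; ring.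
  - intros [[x2 x1] x0]. cbn [dot Sset]. split.
    + intros [y [Hy Hd]]. split; [|split; [|apply Z.divide_1_l]].
      * subst. replace (0 * x2 + 1 * (pp j * y) + 0 * x0) with (y * pp j) by ring. apply Z.divide_factor_r.
      * replace (1 * x2 + 0 * x1 + 0 * x0) with (x2 - 0 * y) by ring. auto.
    + intros [[y Hy] [Hd2 _]]. exists y. split; [lia|].
      replace (x2 - 0 * y) with (1 * x2 + 0 * x1 + 0 * x0) by ring. auto.
Qed.

Lemma cotC3 i j k t : (k < i)%nat -> (k < j)%nat -> ~ (p | t) ->
  has_cotype (Sset (pp i) (pp k * t) (pp j)) (pp (i + j - k)) (pp k) 1.
Proof.
  intros Hki Hkj Ht. split; [lia|]. split; [apply Z.divide_1_l|]. split; [apply pp_div; lia|].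
  assert (Ej : pp j = pp (j - k) * pp k) by (rewrite <- pp_add; f_equal; lia).
  assert (Ei : pp i = pp (i - k) * pp k) by (rewrite <- pp_add; f_equal; lia).
  assert (Eijk : pp (i + j - k) = pp (j - k) * pp i) by (rewrite <- pp_add; f_equal; lia).
  assert (Eijk2 : pp (i + j - k) = pp j * pp (i - k)) by (rewrite <- pp_add; f_equal; lia).
  exists (pp (j - k), -t, 0), (1, 0, 0), (0, 0, 0). split.
  - intros y1 y2 y3.
    assert (Hb : Bezout t (pp (i + j - k)) 1).
    { apply rel_prime_bezout. apply (rel_prime_pp p hp); auto. }
    destruct Hb as [u v Huv].
    exists (y2, u * (pp (j - k) * y2 - y1), 0). cbn [dot Sset].
    split; [|split; [|apply Z.divide_1_l]].
    + exists ((pp (j - k) * y2 - y1) * v).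
      replace (pp (j - k) * y2 + - t * (u * (pp (j - k) * y2 - y1)) + 0 * 0 - y1)
        with ((pp (j - k) * y2 - y1) * (1 - u * t)) by ring.
      rewrite <- Huv. ring.
    + exists 0. ring.
  - intros [[x2 x1] x0]. cbn [dot Sset]. split.
    + intros [y [Hy [r Hr]]]. split; [|split; [|apply Z.divide_1_l]].
      * exists r. rewrite Eijk. subst x1. rewrite Ej.
        replace (pp (j - k) * x2 + - t * (pp (j - k) * pp k * y) + 0 * x0)
          with (pp (j - k) * (x2 - pp k * t * y)) by ring. rewrite Hr. ring.
      * exists (r * pp (i - k) + t * y).
        replace (1 * x2 + 0 * x1 + 0 * x0) with ((x2 - pp k * t * y) + pp k * t * y) by ring.
        rewrite Hr, Ei. ring.
    + intros [[r Hr] [[s Hs] _]].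
      assert (Hx2 : x2 = s * pp k) by lia.
      assert (Htx : t * x1 = pp j * (s - pp (i - k) * r)).
      { rewrite Eijk2 in Hr. rewrite Hx2 in Hr. rewrite Ej. rewrite Ej in Hr. nia. }
      assert (Hdx : (pp j | x1)).
      { apply (Gauss _ t). rewrite Htx. apply Z.divide_factor_l.
        apply rel_prime_sym. apply (rel_prime_pp p hp); auto. }
      destruct Hdx as [y Hy]. exists y. split; [lia|].
      assert (Hty : t * y = s - pp (i - k) * r).
      { apply (Z.mul_reg_l _ _ (pp j)). pose proof (pp_pos p hp j); lia.
        rewrite <- Htx. rewrite Hy. ring. }
      exists r. rewrite Hx2, Ei.
      replace (s * pp k - pp k * t * y) with (pp k * (s - t * y)) by ring.
      rewrite Hty. ring.
Qed.

Lemma sset_subring i j be a1 a2 a3 : (i <= 2 * j)%nat ->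
  has_cotype (Sset (pp i) be (pp j)) a1 a2 a3 -> is_subring (Sset (pp i) be (pp j)).
Proof.
  intros Hij Hc. split; [|split; [eauto|split]].
  - split; [|split].
    + cbn [radd ropp rmul r0 r1 Sset]. exists 0. split; [ring|]. replace (0 - be * 0) with 0 by ring. apply Z.divide_0_r.
    + intros [[x2 x1] x0] [[y2 y1] y0] [y [Hy Hd]] [y' [Hy' Hd']]. cbn [radd ropp rmul r0 r1 Sset].
      exists (y + y'). split; [subst; ring|].
      replace (x2 + y2 - be * (y + y')) with ((x2 - be * y) + (y2 - be * y')) by ring.
      apply Z.divide_add_r; auto.
    + intros [[x2 x1] x0] [y [Hy Hd]]. cbn [radd ropp rmul r0 r1 Sset]. exists (- y). split; [subst; ring|].
      replace (- x2 - be * - y) with (- (x2 - be * y)) by ring. apply Z.divide_opp_r; auto.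
  - cbn [radd ropp rmul r0 r1 Sset]. exists 0. split; [ring|]. replace (0 - be * 0) with 0 by ring. apply Z.divide_0_r.
  - intros [[x2 x1] x0] [[y2 y1] y0] [y [Hy Hd]] [y' [Hy' Hd']]. cbn [radd ropp rmul r0 r1 Sset].
    exists (y * y0 + y' * x0). split; [subst; ring|].
    assert (Hg : (pp i | pp j * pp j)).
    { rewrite <- pp_add. apply pp_div. lia. }
    replace (x2 * y0 + x1 * y1 + x0 * y2 - be * (y * y0 + y' * x0))
      with (y0 * (x2 - be * y) + x0 * (y2 - be * y') + (pp j * pp j) * (y * y')) by (subst; ring).
    apply Z.divide_add_r; [apply Z.divide_add_r|].
    + apply Z.divide_mul_r; auto.
    + apply Z.divide_mul_r; auto.
    + apply Z.divide_mul_l; auto.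
Qed.

End Q.

Lemma Teq (T : subset3) u v : T u -> u = v -> T v.
Proof. intros; subst; auto. Qed.

Lemma triple_eq (a b c a' b' c' : Z) : a = a' -> b = b' -> c = c' -> ((a, b, c) : Z3) = (a', b', c').
Proof. intros; subst; auto. Qed.

Ltac treq := cbn [lc radd smul rmul r1]; apply triple_eq; ring.

Section Q.
Variable p : Z.
Hypothesis hp : prime p.
Notation pp := (pp p).

Lemma gcd_pp x n : exists k, (k <= n)%nat /\ Z.gcd x (pp n) = pp k.
Proof.
  destruct (div_pp p hp (Z.gcd x (pp n)) n) as [k [Hk Hg]].
  apply Z.gcd_nonneg. apply Z.gcd_divide_r. eauto.
Qed.

Lemma structure T a b a3 : is_subring T -> has_cotype T (pp a) (pp b) a3 ->
  exists i j be, (i <= 2 * j)%nat /\ 0 <= be < pp i /\ same T (Sset (pp i) be (pp j)).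
Proof.
  intros [_ [_ [H1 Hmul]]] Hc.
  assert (Hlc : forall u v k l, T u -> T v -> T (lc k u l v)) by (intros; eapply cot_lc; eauto).
  assert (HA : forall u, T (smul (pp a) u)) by (apply (cot_exp _ _ _ _ _ Hc); apply Z.divide_refl).
  destruct (least_nat (fun j => exists x2, T (x2, pp j, 0)) a) as [j [[y0 Hy0] Hjmin]].
  { exists 0. eapply Teq. apply (HA (0, 1, 0)). treq. }
  assert (C1 : forall x2 x1, T (x2, x1, 0) -> (pp j | x1)).
  { intros x2 x1 Hx. destruct (gcd_pp x1 j) as [k [Hk Hg]].
    destruct (Zis_gcd_bezout _ _ _ (Zgcd_is_gcd x1 (pp j))) as [u v Huv].
    assert (Hq : exists x, T (x, pp k, 0)).
    { exists (u * x2 + v * y0). eapply Teq. apply (Hlc _ _ u v Hx Hy0).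
      cbn [lc radd smul]. apply triple_eq; try ring. rewrite <- Hg. rewrite <- Huv. ring. }
    assert (k = j).
    { destruct (Nat.lt_ge_cases k j); [exfalso; eapply Hjmin; eauto | lia]. }
    subst k. rewrite <- Hg. apply Z.gcd_divide_l. }
  destruct (least_nat (fun i => T (pp i, 0, 0)) a) as [i [Hi Himin]].
  { eapply Teq. apply (HA (1, 0, 0)). treq. }
  assert (C2 : forall x2, T (x2, 0, 0) -> (pp i | x2)).
  { intros x2 Hx. destruct (gcd_pp x2 i) as [k [Hk Hg]].
    destruct (Zis_gcd_bezout _ _ _ (Zgcd_is_gcd x2 (pp i))) as [u v Huv].
    assert (Hq : T (pp k, 0, 0)).
    { eapply Teq. apply (Hlc _ _ u v Hx Hi).
      cbn [lc radd smul]. apply triple_eq; try ring. rewrite <- Hg. rewrite <- Huv. ring. }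
    assert (k = i).
    { destruct (Nat.lt_ge_cases k i); [exfalso; eapply Himin; eauto | lia]. }
    subst k. rewrite <- Hg. apply Z.gcd_divide_l. }
  assert (Hpi : 0 < pp i) by (apply pp_pos; auto).
  set (be := y0 mod pp i).
  assert (Hbe : T (be, pp j, 0)).
  { eapply Teq. apply (Hlc _ _ 1 (- (y0 / pp i)) Hy0 Hi).
    cbn [lc radd smul]. apply triple_eq; try ring. subst be.
    rewrite (Z.div_mod y0 (pp i)) at 1; lia. }
  exists i, j, be. split; [|split].
  - apply (pp_div_le p hp). replace (2 * j)%nat with (j + j)%nat by lia. rewrite pp_add.
    apply C2. eapply Teq. apply (Hmul _ _ Hbe Hbe). treq.
  - subst be. apply Z.mod_pos_bound. auto.
  - intros [[x2 x1] x0]. cbn [Sset]. split.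
    + intros Hu.
      assert (Hv : T (x2, x1, 0)) by (eapply Teq; [apply (Hlc _ _ 1 (- x0) Hu H1)|]; treq).
      destruct (C1 _ _ Hv) as [y Hy]. exists y. split; [lia|].
      apply C2. eapply Teq. apply (Hlc _ _ 1 (- y) Hv Hbe). cbn [lc radd smul]. subst x1.
      apply triple_eq; ring.
    + intros [y [Hy [k Hk]]].
      assert (Hv : T (lc y (be, pp j, 0) k (pp i, 0, 0))) by auto.
      eapply Teq. apply (Hlc _ _ 1 x0 Hv H1). cbn [lc radd smul r1]. subst x1.
      apply triple_eq; lia.
Qed.

End Q.

Lemma NoDup_flat_map {A B} (f : A -> list B) (l : list A) :
  NoDup l -> (forall x, In x l -> NoDup (f x)) ->
  (forall x y z, In x l -> In y l -> In z (f x) -> In z (f y) -> x = y) ->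
  NoDup (flat_map f l).
Proof.
  induction l as [|x l IH]; intros Hl Hf Hd; simpl; [constructor|].
  inversion Hl; subst. apply NoDup_app.
  - apply Hf; simpl; auto.
  - apply IH; auto. intros; apply Hf; simpl; auto. intros; eapply Hd; simpl; eauto.
  - intros z Hz Hz'. apply in_flat_map in Hz'. destruct Hz' as [y [Hy Hzy]].
    assert (x = y) by (eapply Hd; simpl; eauto). subst. auto.
Qed.

Lemma length_flat_map_const {A B} (f : A -> list B) (l : list A) c :
  (forall x, In x l -> length (f x) = c) -> length (flat_map f l) = (length l * c)%nat.
Proof.
  induction l as [|x l IH]; intros H; simpl; auto.
  rewrite length_app, H, IH; simpl; auto. intros; apply H; simpl; auto.
Qed.

Definition zl (n : nat) : list Z := map Z.of_nat (seq 0 n).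

Lemma in_zl t n : In t (zl n) <-> 0 <= t < Z.of_nat n.
Proof.
  unfold zl. rewrite in_map_iff. split.
  - intros [x [<- Hx]]. apply in_seq in Hx. lia.
  - intros H. exists (Z.to_nat t). split; [lia|]. apply in_seq. lia.
Qed.

Lemma nodup_zl n : NoDup (zl n).
Proof.
  unfold zl. apply NoDup_map_NoDup_ForallPairs; [|apply seq_NoDup].
  intros x y _ _ H. lia.
Qed.

Lemma length_zl n : length (zl n) = n.
Proof. unfold zl. rewrite length_map, length_seq. auto. Qed.

Section Q.
Variable p : Z.
Hypothesis hp : prime p.
Notation pp := (pp p).

Definition zl1 : list Z := map Z.of_nat (seq 1 (Z.to_nat p - 1)).

Lemma in_zl1 r : In r zl1 <-> 1 <= r < p.
Proof.
  pose proof (p_gt1 p hp). unfold zl1. rewrite in_map_iff. split.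
  - intros [x [<- Hx]]. apply in_seq in Hx. lia.
  - intros H'. exists (Z.to_nat r). split; [lia|]. apply in_seq. lia.
Qed.

Definition units (m : nat) : list Z :=
  flat_map (fun q => map (fun r => p * q + r) zl1) (zl (Z.to_nat (pp (m - 1)))).

Lemma in_units t m : (1 <= m)%nat -> (In t (units m) <-> 0 <= t < pp m /\ ~ (p | t)).
Proof.
  intros Hm. pose proof (p_gt1 p hp).
  assert (Em : pp m = p * pp (m - 1)) by (rewrite <- pp_S; f_equal; lia).
  pose proof (pp_pos p hp (m - 1)).
  unfold units. rewrite in_flat_map. split.
  - intros [q [Hq Ht]]. apply in_zl in Hq. apply in_map_iff in Ht. destruct Ht as [r [<- Hr]].
    apply in_zl1 in Hr. rewrite Z2Nat.id in Hq by lia. split; [nia|].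
    intros Hd. assert (Hpr : (p | r)).
    { replace r with ((p * q + r) - p * q) by ring. apply Z.divide_sub_r; auto. apply Z.divide_factor_l. }
    apply Z.divide_pos_le in Hpr; lia.
  - intros [Ht Hd]. exists (t / p). split.
    + apply in_zl. rewrite Z2Nat.id by lia. split. apply Z.div_pos; lia.
      apply Z.div_lt_upper_bound; lia.
    + apply in_map_iff. exists (t mod p). split. rewrite (Z.div_mod t p) at 3; lia.
      apply in_zl1. pose proof (Z.mod_pos_bound t p). split; [|lia].
      destruct (Z.eq_dec (t mod p) 0); [|lia]. exfalso. apply Hd. apply Z.mod_divide; lia.
Qed.

Lemma nodup_units m : NoDup (units m).
Proof.
  pose proof (p_gt1 p hp). unfold units. apply NoDup_flat_map.
  - apply nodup_zl.
  - intros q _. apply NoDup_map_NoDup_ForallPairs. intros x y _ _ H'. lia.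
    unfold zl1. apply NoDup_map_NoDup_ForallPairs; [|apply seq_NoDup]. intros x y _ _ H'. lia.
  - intros x y z Hx Hy Hzx Hzy. apply in_map_iff in Hzx, Hzy.
    destruct Hzx as [r [Hr Hr']]. destruct Hzy as [r' [Hr2 Hr2']].
    apply in_zl1 in Hr', Hr2'. nia.
Qed.

Lemma length_units m : length (units m) = (Z.to_nat (pp (m - 1)) * (Z.to_nat p - 1))%nat.
Proof.
  unfold units. rewrite (length_flat_map_const _ _ (Z.to_nat p - 1)).
  - rewrite length_zl. auto.
  - intros. rewrite length_map. unfold zl1. rewrite length_map, length_seq. auto.
Qed.

End Q.

Definition trip := (nat * nat * Z)%type.

Lemma div3_iff i x : (i <= x / 3 <-> 3 * i <= x)%nat.
Proof.
  split; intros H.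
  - pose proof (Nat.Div0.mul_div_le x 3). lia.
  - apply Nat.div_le_lower_bound; lia.
Qed.

Section Q.
Variable p : Z.
Hypothesis hp : prime p.
Notation pp := (pp p).

Definition toSet (tr : trip) : subset3 := let '(i, j, be) := tr in Sset (pp i) be (pp j).
Definition valid (tr : trip) : Prop := let '(i, j, be) := tr in (i <= 2 * j)%nat /\ 0 <= be < pp i.

Definition Mb (a b : nat) : nat := Nat.min (a - 1) (2 * (a + b) / 3).

Definition L1 (a b : nat) : list trip :=
  if (andb (Nat.leb b a) (Nat.leb a (2 * b))) then map (fun t => (a, b, pp b * t)) (zl (Z.to_nat (pp (a - b)))) else [].
Definition L2 (a b : nat) : list trip := if (b <? a)%nat then [(b, a, 0)] else [].
Definition L3 (a b : nat) : list trip :=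
  flat_map (fun i => map (fun t => (i, (a + b - i)%nat, pp b * t)) (units p (i - b))) (seq (b + 1) (Mb a b - b)).
Definition LL (a b : nat) : list trip := L1 a b ++ L2 a b ++ L3 a b.

Lemma in_seqM i a b : In i (seq (b + 1) (Mb a b - b)) <-> (b < i /\ i < a /\ 3 * i <= 2 * (a + b))%nat.
Proof.
  rewrite in_seq. unfold Mb. pose proof (div3_iff i (2 * (a + b))).
  pose proof (div3_iff (a-1) (2 * (a + b))). split; intros; lia.
Qed.

Lemma LL_good a b tr : In tr (LL a b) -> valid tr /\ has_cotype (toSet tr) (pp a) (pp b) 1.
Proof.
  unfold LL. intros H. apply in_app_or in H. destruct H as [H|H]; [|apply in_app_or in H; destruct H as [H|H]].
  - unfold L1 in H. destruct (andb (Nat.leb b a) (Nat.leb a (2 * b))) eqn:E; [|destruct H].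
    apply andb_prop in E. destruct E as [E1 E2]. apply Nat.leb_le in E1, E2.
    apply in_map_iff in H. destruct H as [t [<- Ht]]. apply in_zl in Ht.
    pose proof (pp_pos p hp (a - b)). rewrite Z2Nat.id in Ht by lia.
    split.
    + simpl. split; [lia|]. pose proof (pp_pos p hp b).
      assert (pp a = pp b * pp (a - b)) by (rewrite <- pp_add; f_equal; lia). nia.
    + simpl. apply cotC1; auto.
  - unfold L2 in H. destruct (b <? a)%nat eqn:E; [|destruct H]. apply Nat.ltb_lt in E.
    destruct H as [<-|[]]. split.
    + simpl. split; [lia|]. pose proof (pp_pos p hp b). lia.
    + simpl. apply cotC2; auto.
  - unfold L3 in H. apply in_flat_map in H. destruct H as [i [Hi H]].
    apply in_seqM in Hi. apply in_map_iff in H. destruct H as [t [<- Ht]].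
    apply in_units in Ht; auto; [|lia]. split.
    + simpl. split; [lia|]. pose proof (pp_pos p hp b).
      assert (pp i = pp b * pp (i - b)) by (rewrite <- pp_add; f_equal; lia). nia.
    + simpl. replace (pp a) with (pp (i + (a + b - i) - b)) by (f_equal; lia).
      apply cotC3; [exact hp|lia|lia|apply Ht].
Qed.

Lemma LL_complete tr : valid tr -> exists a b, In tr (LL a b).
Proof.
  destruct tr as [[i j] be]. simpl. intros [Hij [Hb0 Hbi]]. unfold LL.
  destruct (Z.eq_dec be 0) as [->|Hbe].
  - destruct (Nat.le_gt_cases j i).
    + exists i, j. apply in_or_app. left. unfold L1.
      replace (andb (Nat.leb j i) (Nat.leb i (2 * j))) with true by (symmetry; apply andb_true_intro; split; apply Nat.leb_le; lia).
      apply in_map_iff. exists 0. split; [f_equal; ring|]. apply in_zl.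
      pose proof (pp_pos p hp (i - j)). lia.
    + exists j, i. apply in_or_app. right. apply in_or_app. left. unfold L2.
      replace (i <? j)%nat with true by (symmetry; apply Nat.ltb_lt; lia). simpl; auto.
  - destruct (val_decomp p hp be Hbe) as [k [t [Hkt Ht]]].
    pose proof (pp_pos p hp k). assert (Htp : 0 < t) by nia.
    assert (Hki : (k < i)%nat) by (apply (pp_lt_iff p hp); nia).
    destruct (Nat.le_gt_cases j k).
    + exists i, j. apply in_or_app. left. unfold L1.
      replace (andb (Nat.leb j i) (Nat.leb i (2 * j))) with true by (symmetry; apply andb_true_intro; split; apply Nat.leb_le; lia).
      apply in_map_iff. exists (pp (k - j) * t).
      assert (Ek : pp k = pp j * pp (k - j)) by (rewrite <- pp_add; f_equal; lia).
      split; [f_equal; rewrite Hkt, Ek; ring|]. apply in_zl.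
      assert (Ei : pp i = pp j * pp (i - j)) by (rewrite <- pp_add; f_equal; lia).
      pose proof (pp_pos p hp (i - j)). pose proof (pp_pos p hp j). pose proof (pp_pos p hp (k-j)).
      rewrite Z2Nat.id by lia. split; [nia|].
      assert (pp j * (pp (k - j) * t) < pp j * pp (i - j)) by nia. nia.
    + exists (i + j - k)%nat, k. apply in_or_app. right. apply in_or_app. right. unfold L3.
      apply in_flat_map. exists i. split.
      * apply in_seqM. lia.
      * apply in_map_iff. exists t. split.
        -- rewrite Hkt. f_equal. f_equal. lia.
        -- apply (in_units p hp); [lia|]. split; [|auto]. split; [lia|].
           assert (Ei : pp i = pp k * pp (i - k)) by (rewrite <- pp_add; f_equal; lia). nia.
Qed.

Lemma div_small al d : 0 < al -> (al | d) -> - al < d < al -> d = 0.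
Proof. intros H [c Hc] Hb. subst. destruct (Z.lt_trichotomy c 0) as [Hc|[Hc|Hc]]; [nia|subst; ring|nia]. Qed.

Lemma toSet_inj t1 t2 : valid t1 -> valid t2 -> same (toSet t1) (toSet t2) -> t1 = t2.
Proof.
  destruct t1 as [[i j] be], t2 as [[i' j'] be']. simpl. intros [_ [H1 H2]] [_ [H1' H2']] Hs.
  pose proof (pp_pos p hp i) as H3. pose proof (pp_pos p hp i') as H3'. pose proof (pp_pos p hp j) as H4. pose proof (pp_pos p hp j') as H5.
  assert (Ha : forall al be ga al' be' ga', 0 < ga' -> same (Sset al be ga) (Sset al' be' ga') -> (al' | al)).
  { intros al0 be0 ga0 al1 be1 ga1 Hg Hs0. destruct (proj1 (Hs0 (al0, 0, 0))) as [y [Hy Hd]].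
    - exists 0. split; [ring|]. replace (al0 - be0 * 0) with (1 * al0) by ring. apply Z.divide_factor_r.
    - assert (y = 0) by nia. subst. replace al0 with (al0 - be1 * 0) by ring. auto. }
  assert (Hg : forall al be ga al' be' ga', same (Sset al be ga) (Sset al' be' ga') -> (ga' | ga)).
  { intros al0 be0 ga0 al1 be1 ga1 Hs0. destruct (proj1 (Hs0 (be0, ga0, 0))) as [y [Hy Hd]].
    - exists 1. split; [ring|]. replace (be0 - be0 * 1) with 0 by ring. apply Z.divide_0_r.
    - exists y. lia. }
  assert (Hsym : same (Sset (pp i') be' (pp j')) (Sset (pp i) be (pp j))) by (intro u; symmetry; apply Hs).
  assert (Ei : pp i = pp i').
  { apply Z.divide_antisym_nonneg; try lia. exact (Ha _ _ _ _ _ _ H4 Hsym). exact (Ha _ _ _ _ _ _ H5 Hs). }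
  assert (Ej : pp j = pp j').
  { apply Z.divide_antisym_nonneg; try lia. exact (Hg _ _ _ _ _ _ Hsym). exact (Hg _ _ _ _ _ _ Hs). }
  apply (pp_inj p hp) in Ei. apply (pp_inj p hp) in Ej. subst i' j'.
  f_equal. destruct (proj1 (Hs (be, pp j, 0))) as [y [Hy Hd]].
  - exists 1. split; [ring|]. replace (be - be * 1) with 0 by ring. apply Z.divide_0_r.
  - assert (y = 1) by nia. subst y. assert (be - be' * 1 = 0) by (apply (div_small (pp i)); [lia|exact Hd|lia]). lia.
Qed.

Lemma nodup_LL a b : NoDup (LL a b).
Proof.
  pose proof (pp_pos p hp b) as Hpb.
  unfold LL. apply NoDup_app; [|apply NoDup_app|].
  - unfold L1. destruct (andb _ _); [|constructor].
    apply NoDup_map_NoDup_ForallPairs; [|apply nodup_zl]. intros x y _ _ Hxy. inversion Hxy. nia.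
  - unfold L2. destruct (_ <? _)%nat; repeat constructor. auto.
  - unfold L3. apply NoDup_flat_map.
    + apply seq_NoDup.
    + intros i _. apply NoDup_map_NoDup_ForallPairs; [|apply nodup_units; auto]. intros x y _ _ Hxy. inversion Hxy. nia.
    + intros x y z _ _ Hx Hy. apply in_map_iff in Hx, Hy. destruct Hx as [t [<- _]]. destruct Hy as [t' [Ht _]].
      inversion Ht. auto.
  - unfold L2, L3. intros tr H2 H3. destruct (b <? a)%nat eqn:E; [|destruct H2].
    destruct H2 as [<-|[]]. apply in_flat_map in H3. destruct H3 as [i [Hi H]].
    apply in_seqM in Hi. apply in_map_iff in H. destruct H as [t [Ht0 _]]. inversion Ht0. lia.
  - unfold L1, L2, L3. intros tr H1 H23. destruct (andb (Nat.leb b a) (Nat.leb a (2 * b))) eqn:E; [|destruct H1].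
    apply in_map_iff in H1. destruct H1 as [t [<- _]].
    apply in_app_or in H23. destruct H23 as [H2|H3].
    + destruct (b <? a)%nat eqn:E2; [|destruct H2]. destruct H2 as [H2|[]]. inversion H2. subst.
      apply Nat.ltb_lt in E2. lia.
    + apply in_flat_map in H3. destruct H3 as [i [Hi H]].
      apply in_seqM in Hi. apply in_map_iff in H. destruct H as [t' [Ht0 _]]. inversion Ht0. lia.
Qed.

Lemma length_L3_aux a b n : Z.of_nat (length (flat_map (fun i => map (fun t => (i, (a + b - i)%nat, pp b * t)) (units p (i - b))) (seq (b + 1) n))) = pp n - 1.
Proof.
  pose proof (p_gt1 p hp).
  induction n as [|n IH]. { rewrite pp_0. reflexivity. }
  rewrite seq_S, flat_map_app, length_app, Nat2Z.inj_add, IH. simpl flat_map.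
  rewrite app_nil_r, length_map, length_units.
  replace (b + 1 + n - b - 1)%nat with n by lia. rewrite pp_S.
  pose proof (pp_pos p hp n).
  rewrite Nat2Z.inj_mul, Z2Nat.id by lia. rewrite Nat2Z.inj_sub by lia. rewrite Z2Nat.id by lia.
  simpl. ring.
Qed.

Definition Ncl (a b : nat) : Z :=
  (if andb (Nat.leb b a) (Nat.leb a (2 * b)) then pp (a - b) else 0) + (if Nat.ltb b a then 1 else 0)
  + (pp (Mb a b - b) - 1).

Lemma length_LL a b : Z.of_nat (length (LL a b)) = Ncl a b.
Proof.
  unfold LL, Ncl. rewrite !length_app, !Nat2Z.inj_add. unfold L3. rewrite length_L3_aux. rewrite Z.add_assoc.
  f_equal. f_equal.
  - unfold L1. destruct (andb _ _); simpl; auto. rewrite length_map, length_zl.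
    rewrite Z2Nat.id; auto. pose proof (pp_pos p hp (a - b)); lia.
  - unfold L2. destruct (Nat.ltb b a); simpl; auto.
Qed.

End Q.

Section Q.
Variable p : Z.
Hypothesis hp : prime p.
Notation pp := (pp p).

Lemma pp_shift_eq X Y k : X = (Y + k)%nat -> pp X = p ^ Z.of_nat k * pp Y.
Proof. intros ->. rewrite pp_add. rewrite Z.mul_comm. reflexivity. Qed.

Lemma pp_shift0 X Y : X = Y -> pp X = pp Y.
Proof. intros ->. reflexivity. Qed.
Lemma pp_shift1 X Y : X = (Y + 1)%nat -> pp X = p * pp Y.
Proof. intros ->. rewrite Nat.add_1_r, pp_S. ring. Qed.
Lemma pp_const1 X : X = 1%nat -> pp X = p.
Proof. intros ->. rewrite pp_S, pp_0. ring. Qed.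

Lemma pp_const_eq X k : X = k -> pp X = p ^ Z.of_nat k.
Proof. intros ->. reflexivity. Qed.

Ltac split_all :=
  repeat (cbn [andb] in *; match goal with
  | |- context [Nat.leb ?x ?y] => destruct (Nat.leb_spec x y); try (exfalso; lia)
  | |- context [Nat.ltb ?x ?y] => destruct (Nat.ltb_spec x y); try (exfalso; lia)
  | |- context [Nat.eqb ?x ?y] => destruct (Nat.eqb_spec x y); try (exfalso; lia)
  | |- context [Nat.min ?x ?y] => let Hm := fresh in
        destruct (Nat.min_spec x y) as [[? Hm]|[? Hm]]; rewrite Hm in *; clear Hm; try (exfalso; lia)
  end); cbn [andb] in *.

Ltac gen_div :=
  repeat match goal with
  | |- context [(?x / 3)%nat] =>
      let q := fresh "q" in let r := fresh "r" in
      pose proof (Nat.div_mod x 3 ltac:(lia)); pose proof (Nat.mod_upper_bound x 3 ltac:(lia));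
      set (q := (x / 3)%nat) in *; set (r := (x mod 3)%nat) in *; clearbody q r
  end.

Ltac pp_const :=
  repeat match goal with
  | |- context [pp ?X] =>
     lazymatch X with
     | O => fail
     | S _ => fail
     | _ => first
       [ replace (pp X) with 1 by (symmetry; apply (pp_const_eq X 0); lia)
       | replace (pp X) with p by (symmetry; apply pp_const1; lia)
       | replace (pp X) with (p ^ 2) by (symmetry; apply (pp_const_eq X 2); lia)
       | replace (pp X) with (p ^ 3) by (symmetry; apply (pp_const_eq X 3); lia)
       | replace (pp X) with (p ^ 4) by (symmetry; apply (pp_const_eq X 4); lia)
       | replace (pp X) with (p ^ 5) by (symmetry; apply (pp_const_eq X 5); lia) ]
     end
  end.

Ltac pp_step :=
  match goal with
  | |- context [pp ?X] => match goal with
    | |- context [pp ?Y] =>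
      lazymatch X with Y => fail | _ =>
      first
       [ replace (pp X) with (pp Y) by (symmetry; apply pp_shift0; lia)
       | replace (pp X) with (p * pp Y) by (symmetry; apply pp_shift1; lia)
       | replace (pp X) with (p ^ 2 * pp Y) by (symmetry; apply (pp_shift_eq X Y 2); lia)
       | replace (pp X) with (p ^ 3 * pp Y) by (symmetry; apply (pp_shift_eq X Y 3); lia)
       | replace (pp X) with (p ^ 4 * pp Y) by (symmetry; apply (pp_shift_eq X Y 4); lia)
       | replace (pp X) with (p ^ 5 * pp Y) by (symmetry; apply (pp_shift_eq X Y 5); lia)
       | replace (pp X) with (p ^ 6 * pp Y) by (symmetry; apply (pp_shift_eq X Y 6); lia) ]
      end
    end
  end.

Ltac crush := gen_div; split_all; pp_const; repeat pp_step; ring.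

Definition P1f (b d : nat) : Z := if (d <=? b)%nat then pp d else 0.
Definition Qf (b d : nat) : Z := if (d =? 0)%nat then 0 else pp (Nat.min (d - 1) ((2 * d + b) / 3)).

Lemma KP b d :
  P1f b d - (if andb (1 <=? b)%nat (1 <=? d)%nat then p * P1f (b - 1) (d - 1) else 0)
  - (if (3 <=? d)%nat then p ^ 2 * P1f b (d - 3) else 0)
  + (if andb (1 <=? b)%nat (4 <=? d)%nat then p ^ 3 * P1f (b - 1) (d - 4) else 0)
  = (if (d =? 0)%nat then 1 else 0) - (if (d =? 3)%nat then p ^ 2 else 0).
Proof. unfold P1f. crush. Qed.

Lemma KQ b d :
  Qf b d - (if andb (1 <=? b)%nat (1 <=? d)%nat then p * Qf (b - 1) (d - 1) else 0)
  - (if (3 <=? d)%nat then p ^ 2 * Qf b (d - 3) else 0)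
  + (if andb (1 <=? b)%nat (4 <=? d)%nat then p ^ 3 * Qf (b - 1) (d - 4) else 0)
  = if (b =? 0)%nat then (if (d =? 1)%nat then 1 else 0) + (if (d =? 2)%nat then p else 0) + (if (d =? 3)%nat then p ^ 2 else 0)
    else (if (d =? 1)%nat then 1 else 0) - (if (d =? 4)%nat then p ^ 2 else 0).
Proof. unfold Qf. crush. Qed.

Lemma Ncl_eq x y : Ncl p x y = if (y <=? x)%nat then P1f y (x - y) + Qf y (x - y) else 0.
Proof. unfold Ncl, Mb, P1f, Qf. crush. Qed.

Definition Dp (F : nat -> nat -> Z) (a b : nat) : Z :=
  F a b - (if andb (2 <=? a)%nat (1 <=? b)%nat then p * F (a - 2)%nat (b - 1)%nat else 0)
  - (if (3 <=? a)%nat then p ^ 2 * F (a - 3)%nat b else 0)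
  + (if andb (5 <=? a)%nat (1 <=? b)%nat then p ^ 3 * F (a - 5)%nat (b - 1)%nat else 0).

Definition Hc (a b : nat) : Z :=
  if (a <? b)%nat then 0 else
  if (b =? 0)%nat then (if (a =? 0)%nat then 1 else 0) + (if (a =? 1)%nat then 1 else 0) + (if (a =? 2)%nat then p else 0)
  else (if (a - b =? 0)%nat then 1 else 0) + (if (a - b =? 1)%nat then 1 else 0)
       - (if (a - b =? 3)%nat then p ^ 2 else 0) - (if (a - b =? 4)%nat then p ^ 2 else 0).

Lemma key a b : Dp (Ncl p) a b = Hc a b.
Proof.
  unfold Dp. rewrite !Ncl_eq.
  destruct (Nat.ltb_spec a b).
  - unfold Hc. split_all; ring.
  - destruct (Nat.le_exists_sub b a H) as [d [Hd _]]. subst a.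
    assert (E1 : (if andb (2 <=? d + b)%nat (1 <=? b)%nat then p * (if (b - 1 <=? d + b - 2)%nat
                   then P1f (b - 1) (d + b - 2 - (b - 1)) + Qf (b - 1) (d + b - 2 - (b - 1)) else 0) else 0)
               = (if andb (1 <=? b)%nat (1 <=? d)%nat then p * (P1f (b - 1) (d - 1) + Qf (b - 1) (d - 1)) else 0)).
    { split_all; try ring. all: replace (d + b - 2 - (b - 1))%nat with (d - 1)%nat by lia. all: ring. }
    assert (E2 : (if (3 <=? d + b)%nat then p ^ 2 * (if (b <=? d + b - 3)%nat
                   then P1f b (d + b - 3 - b) + Qf b (d + b - 3 - b) else 0) else 0)
               = (if (3 <=? d)%nat then p ^ 2 * (P1f b (d - 3) + Qf b (d - 3)) else 0)).
    { split_all; try ring. all: replace (d + b - 3 - b)%nat with (d - 3)%nat by lia. ring. }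
    assert (E3 : (if andb (5 <=? d + b)%nat (1 <=? b)%nat then p ^ 3 * (if (b - 1 <=? d + b - 5)%nat
                   then P1f (b - 1) (d + b - 5 - (b - 1)) + Qf (b - 1) (d + b - 5 - (b - 1)) else 0) else 0)
               = (if andb (1 <=? b)%nat (4 <=? d)%nat then p ^ 3 * (P1f (b - 1) (d - 4) + Qf (b - 1) (d - 4)) else 0)).
    { split_all; try ring. all: replace (d + b - 5 - (b - 1))%nat with (d - 4)%nat by lia. ring. }
    rewrite E1, E2, E3. clear E1 E2 E3.
    replace (b <=? d + b)%nat with true by (symmetry; apply Nat.leb_le; lia).
    replace (d + b - b)%nat with d by lia.
    generalize (KP b d) (KQ b d). unfold Hc.
    replace (d + b - b)%nat with d by lia.
    split_all; intros HKP HKQ; nia.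
Qed.


Lemma zsum_ext n f g : (forall k, (k < n)%nat -> f k = g k) -> zsum n f = zsum n g.
Proof. induction n; intros H; simpl; auto. rewrite IHn, H; auto; intros; apply H; lia. Qed.

Lemma zsum_add n f g : zsum n (fun k => f k + g k) = zsum n f + zsum n g.
Proof. induction n; simpl; auto. rewrite IHn. ring. Qed.

Lemma zsum_zero n f : (forall k, (k < n)%nat -> f k = 0) -> zsum n f = 0.
Proof. induction n; intros H; simpl; auto. rewrite IHn, H; auto; intros; apply H; lia. Qed.

Lemma zsum_single n f k : (k < n)%nat -> (forall i, (i < n)%nat -> i <> k -> f i = 0) -> zsum n f = f k.
Proof.
  induction n; intros Hk H; [lia|]. simpl.
  destruct (Nat.eq_dec k n).
  - subst. rewrite zsum_zero; [ring|]. intros; apply H; lia.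
  - assert (Hn : f n = 0) by (apply H; lia).
    rewrite Hn, IHn; [ring|lia|]. intros; apply H; auto.
Qed.

Lemma fmul_mono_l c i0 j0 g a b :
  fmul (mono c i0 j0) g a b = if andb (i0 <=? a)%nat (j0 <=? b)%nat then c * g (a - i0)%nat (b - j0)%nat else 0.
Proof.
  unfold fmul, mono. destruct (Nat.leb_spec i0 a); cbn [andb].
  - rewrite (zsum_single _ _ i0); [|lia|].
    + destruct (Nat.leb_spec j0 b); cbn [andb].
      * rewrite (zsum_single _ _ j0); [|lia|].
        -- rewrite !Nat.eqb_refl. simpl. ring.
        -- intros j _ Hj. rewrite Nat.eqb_refl. apply Nat.eqb_neq in Hj. rewrite Hj. simpl. ring.
      * apply zsum_zero. intros j Hj. rewrite Nat.eqb_refl. destruct (Nat.eqb_spec j j0); [lia|]. simpl. ring.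
    + intros i _ Hi. apply zsum_zero. intros j _. apply Nat.eqb_neq in Hi. rewrite Hi. simpl. ring.
  - apply zsum_zero. intros i Hi. apply zsum_zero. intros j _. destruct (Nat.eqb_spec i i0); [lia|]. simpl. ring.
Qed.

Lemma fmul_fadd_l f g h a b : fmul (fadd f g) h a b = fmul f h a b + fmul g h a b.
Proof.
  unfold fmul, fadd. rewrite <- zsum_add. apply zsum_ext. intros i _.
  rewrite <- zsum_add. apply zsum_ext. intros j _. ring.
Qed.

Lemma fmul_ext_l f f' g a b : (forall i j, f i j = f' i j) -> fmul f g a b = fmul f' g a b.
Proof. intros H. unfold fmul. apply zsum_ext. intros i _. apply zsum_ext. intros j _. rewrite H. auto. Qed.

Lemma fmul_ext_r f g g' a b : (forall i j, g i j = g' i j) -> fmul f g a b = fmul f g' a b.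
Proof. intros H. unfold fmul. apply zsum_ext. intros i _. apply zsum_ext. intros j _. rewrite H. auto. Qed.

Definition D8 : fps :=
  fadd (mono 1 0 0) (fadd (mono (-1) 1 1) (fadd (mono (- p) 2 1) (fadd (mono (- p ^ 2) 3 0)
  (fadd (mono p 3 2) (fadd (mono (p ^ 2) 4 1) (fadd (mono (p ^ 3) 5 1) (mono (- p ^ 3) 6 2))))))).

Lemma den_eq i j : zeta_den p i j = D8 i j.
Proof.
  unfold zeta_den. rewrite fmul_fadd_l, !fmul_mono_l, !fmul_fadd_l, !fmul_mono_l.
  unfold D8, fadd, mono.
  destruct i as [|[|[|[|[|[|[|i]]]]]]]; destruct j as [|[|[|j]]]; cbn -[Z.mul Z.add Z.sub Z.opp Z.pow]; ring.
Qed.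

Lemma fmul_den F a b : fmul (zeta_den p) F a b =
  Dp F a b - (if andb (1 <=? a)%nat (1 <=? b)%nat then Dp F (a - 1)%nat (b - 1)%nat else 0).
Proof.
  rewrite (fmul_ext_l _ D8) by apply den_eq. unfold D8.
  rewrite !fmul_fadd_l, !fmul_mono_l. unfold Dp.
  destruct a as [|[|[|[|[|[|[|a]]]]]]]; destruct b as [|[|[|b]]]; cbn -[Z.mul Z.add Z.sub Z.opp Z.pow]; ring.
Qed.

Lemma final a b : fmul (zeta_den p) (fun i j => Z.of_nat (length (LL p i j))) a b = zeta_num p a b.
Proof.
  rewrite (fmul_ext_r _ _ (Ncl p)) by (intros; apply length_LL; auto).
  rewrite fmul_den, !key. unfold Hc, zeta_num, fadd, mono.
  destruct a as [|[|[|[|[|[|[|a]]]]]]]; destruct b as [|[|[|b]]]; cbn -[Z.mul Z.add Z.sub Z.opp Z.pow]; ring.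
Qed.

End Q.

Lemma FOP_map {A} (f : A -> subset3) (l : list A) :
  NoDup l -> (forall x y, In x l -> In y l -> same (f x) (f y) -> x = y) ->
  ForallOrdPairs (fun S T => ~ same S T) (map f l).
Proof.
  induction l as [|x l IH]; intros Hn Hi; simpl; constructor.
  - inversion Hn; subst. apply Forall_forall. intros T HT. apply in_map_iff in HT.
    destruct HT as [y [<- Hy]]. intros Hs. assert (x = y) by (apply Hi; simpl; auto). subst. auto.
  - inversion Hn; subst. apply IH; auto. intros; apply Hi; simpl; auto.
Qed.

Theorem theorem2 (p : Z) (hp : prime p) :
  exists N : nat -> nat -> nat,
    (forall a b : nat,
       count_is (fun S => is_subring S /\
                   exists a3 : Z, has_cotype S (p ^ Z.of_nat a) (p ^ Z.of_nat b) a3)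
                (N a b)) /\
    (forall a b : nat,
       fmul (zeta_den p) (fun i j => Z.of_nat (N i j)) a b = zeta_num p a b).
Proof.
  exists (fun a b => length (LL p a b)). split.
  - intros a b. exists (map (toSet p) (LL p a b)). split; [apply length_map|]. split; [|split].
    + intros S HS. apply in_map_iff in HS. destruct HS as [tr [<- Htr]].
      destruct (LL_good p hp a b tr Htr) as [Hv Hc].
      split; [|exists 1; exact Hc].
      destruct tr as [[i j] be]. destruct Hv as [Hij _]. eapply sset_subring; eauto.
    + intros S [Hsub [a3 Hc]].
      change (has_cotype S (pp p a) (pp p b) a3) in Hc.
      destruct (structure p hp S a b a3 Hsub Hc) as [i [j [be [Hij [Hbe Hsame]]]]].
      assert (Hv : valid p (i, j, be)) by (simpl; auto).
      destruct (LL_complete p hp _ Hv) as [a' [b' Hin]].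
      destruct (LL_good p hp _ _ _ Hin) as [_ Hc'].
      assert (Hc2 : has_cotype (toSet p (i, j, be)) (pp p a) (pp p b) a3) by (eapply cot_same; eauto).
      destruct (cot_unique p hp _ _ _ _ _ _ _ Hc2 Hc') as [-> ->].
      exists (toSet p (i, j, be)). split; auto. apply in_map_iff. eauto.
    + apply FOP_map. apply nodup_LL; auto.
      intros x y Hx Hy Hs. apply (toSet_inj p hp); auto.
      apply (LL_good p hp a b x Hx). apply (LL_good p hp a b y Hy).
  - intros a b. apply final; auto.
Qed.
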